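(* Let $n\ge 3$ and let $\Sigma$ be an $n\times n$ matrix with entries $\pm1$; let $\mu(\Sigma)$ denote the number of entries of $\Sigma$ equal to $-1$. (i) If $n=2m+1$ is odd and $\mu(\Sigma)\ge mn-(m-1)$, then there is a matrix $\Sigma'$ equivalent to $\Sigma$ with $\mu(\Sigma')<\mu(\Sigma)$. (ii) If $n=2m$ is even and $\mu(\Sigma)\ge mn-m$, then there is a matrix $\Sigma'$ equivalent to $\Sigma$ with $\mu(\Sigma')<\mu(\Sigma)$.
   Context: Two $r\times n$ matrices with entries $\pm1$ are equivalent if one is obtained from the other by a finite succession of the operations: interchanging two rows or two columns; negating a row or a column. *)

(* Defs.v *)
From mathcomp Require Import all_boot all_algebra.
From Stdlib Require Import Relations.
Set Implicit Arguments. Unset Strict Implicit. Unset Printing Implicit Defensive.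
Import GRing.Theory.
Local Open Scope ring_scope.

Definition pm1_matrix (r n : nat) (S : 'M[int]_(r, n)) : Prop :=
  forall i j, S i j = 1 \/ S i j = -1.

Definition neg_row (r n : nat) (i0 : 'I_r) (S : 'M[int]_(r, n)) : 'M[int]_(r, n) :=
  \matrix_(i, j) (if i == i0 then - S i j else S i j).
Definition neg_col (r n : nat) (j0 : 'I_n) (S : 'M[int]_(r, n)) : 'M[int]_(r, n) :=
  \matrix_(i, j) (if j == j0 then - S i j else S i j).

Inductive elem_op (r n : nat) : 'M[int]_(r, n) -> 'M[int]_(r, n) -> Prop :=
  | op_swap_rows (i1 i2 : 'I_r) S : elem_op S (xrow i1 i2 S)
  | op_swap_cols (j1 j2 : 'I_n) S : elem_op S (xcol j1 j2 S)
  | op_neg_row (i : 'I_r) S : elem_op S (neg_row i S)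
  | op_neg_col (j : 'I_n) S : elem_op S (neg_col j S).

Definition mx_equiv (r n : nat) (S T : 'M[int]_(r, n)) : Prop :=
  clos_refl_trans _ (@elem_op r n) S T.

Definition mu (r n : nat) (S : 'M[int]_(r, n)) : nat :=
  #|[set ij : 'I_r * 'I_n | S ij.1 ij.2 == -1]|.

(* Main.v *)
Require Import Defs.
From mathcomp Require Import all_boot all_order all_algebra.
From mathcomp Require Import zify ring lra.
From Stdlib Require Import Relations.
Set Implicit Arguments. Unset Strict Implicit. Unset Printing Implicit Defensive.
Import Order.TTheory GRing.Theory Num.Theory.
Local Open Scope ring_scope.

Lemma ifneg (b : bool) (x : int) : ~~ b ->
  (if true || b then - x else x) = - (if b then - x else x).
Proof. by case: b. Qed.

Section Flip.
Variable n : nat.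
Implicit Types S : 'M[int]_(n, n).

Definition rowflip (P : pred 'I_n) S : 'M[int]_(n, n) :=
  \matrix_(i, j) (if P i then - S i j else S i j).
Definition colflip (Q : pred 'I_n) S : 'M[int]_(n, n) :=
  \matrix_(i, j) (if Q j then - S i j else S i j).
Definition flipm (P Q : pred 'I_n) S : 'M[int]_(n, n) :=
  \matrix_(i, j) (if P i (+) Q j then - S i j else S i j).

Lemma rowflip_seq S (s : seq 'I_n) : uniq s ->
  mx_equiv S (rowflip (fun i => i \in s) S).
Proof.
elim: s => [|a s IH] /=.
  move=> _; have -> : rowflip (fun i => i \in [::]) S = S.
    by apply/matrixP => i j; rewrite mxE.
  exact: rt_refl.
case/andP => as_ us; apply: rt_trans (IH us) _.
have -> : rowflip (fun i => i \in a :: s) S = neg_row a (rowflip (fun i => i \in s) S).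
  apply/matrixP => i j.
  rewrite !mxE in_cons; have [->|_] := eqVneq i a; last by [].
  exact: (ifneg _ as_).
exact: rt_step (op_neg_row _ _).
Qed.

Lemma colflip_seq S (s : seq 'I_n) : uniq s ->
  mx_equiv S (colflip (fun i => i \in s) S).
Proof.
elim: s => [|a s IH] /=.
  move=> _; have -> : colflip (fun i => i \in [::]) S = S.
    by apply/matrixP => i j; rewrite mxE.
  exact: rt_refl.
case/andP => as_ us; apply: rt_trans (IH us) _.
have -> : colflip (fun i => i \in a :: s) S = neg_col a (colflip (fun i => i \in s) S).
  apply/matrixP => i j; rewrite !mxE in_cons; have [->|_] := eqVneq j a; last by [].
  exact: (ifneg _ as_).
exact: rt_step (op_neg_col _ _).
Qed.

Lemma flipm_equiv P Q S : mx_equiv S (flipm P Q S).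
Proof.
have -> : flipm P Q S = colflip (fun i => i \in enum Q) (rowflip (fun i => i \in enum P) S).
  apply/matrixP => i j; rewrite !mxE !mem_enum.
  have -> : (i \in P) = P i by [].
  have -> : (j \in Q) = Q j by [].
  by case: (P i); case: (Q j) => //=; rewrite opprK.
apply: rt_trans (rowflip_seq S (enum_uniq P)) _.
exact: colflip_seq (enum_uniq Q).
Qed.

Definition R S i := \sum_j S i j.
Definition C S j := \sum_i S i j.
Definition T S := \sum_i \sum_j S i j.
Definition kr S i : nat := \sum_j (nat_of_bool (S i j == (-1)%R)).
Definition kc S j : nat := \sum_i (nat_of_bool (S i j == (-1)%R)).
Definition Dv (P Q : pred 'I_n) S : int :=
  \sum_i (P i)%:R * R S i + \sum_j (Q j)%:R * C S j
  - 2 * \sum_i \sum_j (P i && Q j)%:R * S i j.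

Lemma sum_pm (k : nat) (f : 'I_k -> int) : (forall j, f j = 1 \/ f j = -1) ->
  \sum_j f j = k%:Z - 2 * (\sum_j (nat_of_bool (f j == (-1)%R)))%:Z.
Proof.
move=> hf.
transitivity (\sum_j (1 - 2 * ((nat_of_bool (f j == (-1)%R)))%:Z)).
  by apply: eq_bigr => j _; case: (hf j) => ->.
rewrite sumrB -mulr_sumr sumr_const card_ord; congr (_ - 2 * _); first exact: natz.
by rewrite -[RHS]natz natr_sum; apply: eq_bigr => j _; rewrite natz.
Qed.

Lemma card_sum (P : pred 'I_n) : #|[set i | P i]| = \sum_i (P i : nat).
Proof.
by rewrite -sum1dep_card big_mkcond; apply: eq_bigr => i _; case: (P i).
Qed.

Lemma mu_sum S : mu S = \sum_i kr S i.
Proof.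
rewrite /mu -sum1dep_card big_mkcond /= /kr pair_bigA /=.
by apply: eq_bigr => p _; case: (_ == _).
Qed.

Lemma mu_sumc S : mu S = \sum_j kc S j.
Proof. by rewrite mu_sum /kr /kc exchange_big. Qed.

Lemma R_kr S i : pm1_matrix S -> R S i = n%:Z - 2 * (kr S i)%:Z.
Proof. by move=> h; apply: sum_pm => j; apply: h. Qed.

Lemma C_kc S j : pm1_matrix S -> C S j = n%:Z - 2 * (kc S j)%:Z.
Proof. by move=> h; apply: sum_pm => i; apply: h. Qed.

Lemma T_mu S : pm1_matrix S -> T S = (n * n)%:Z - 2 * (mu S)%:Z.
Proof.
move=> h; rewrite /T.
under eq_bigr do rewrite -/(R S _) R_kr //.
rewrite sumrB -mulr_sumr sumr_const card_ord mu_sum.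
congr (_ - 2 * _); first by rewrite -mulr_natr natz PoszM.
by rewrite -[RHS]natz natr_sum; apply: eq_bigr => j _; rewrite natz.
Qed.

Lemma flipm_pm1 P Q S : pm1_matrix S -> pm1_matrix (flipm P Q S).
Proof.
move=> h i j; rewrite mxE; case: (_ (+) _); last exact: h.
by case: (h i j) => ->; [right|left].
Qed.

Lemma sum_lin (I : finType) (F G H K : I -> int) :
  \sum_i (F i - 2 * (G i + H i - 2 * K i)) =
  \sum_i F i - 2 * (\sum_i G i + \sum_i H i - 2 * \sum_i K i).
Proof. by rewrite sumrB -mulr_sumr sumrB big_split -mulr_sumr. Qed.

Lemma flip_T P Q S : T (flipm P Q S) = T S - 2 * Dv P Q S.
Proof.
rewrite /T /Dv.
have e1 : \sum_i (P i)%:R * R S i = \sum_i \sum_j (P i)%:R * S i j.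
  by apply: eq_bigr => i _; rewrite mulr_sumr.
have e2 : \sum_j (Q j)%:R * C S j = \sum_i \sum_j (Q j)%:R * S i j.
  by rewrite exchange_big; apply: eq_bigr => j _; rewrite mulr_sumr.
rewrite e1 e2.
under eq_bigr => i _.
  under eq_bigr => j _.
    rewrite mxE (_ : (if P i (+) Q j then - S i j else S i j) =
       S i j - 2 * ((P i)%:R * S i j + (Q j)%:R * S i j
                    - 2 * ((P i && Q j)%:R * S i j))); last first.
      by case: (P i); case: (Q j) => /=; ring.
    over.
  rewrite sum_lin.
  over.
by rewrite sum_lin.
Qed.

Lemma flip_good P Q S : pm1_matrix S -> Dv P Q S < 0 ->
  exists S', mx_equiv S S' /\ (mu S' < mu S)%N.
Proof.
move=> h hD; exists (flipm P Q S); split; first exact: flipm_equiv.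
have := flip_T P Q S; rewrite !T_mu //; last exact: flipm_pm1.
move: hD; rewrite -/(Dv P Q S); set d := Dv P Q S; set a := mu (flipm P Q S).
set b := mu S; set nn := (n * n)%N => hD E.
have : (a%:Z < b%:Z) by move: E hD; clear; lia.
by rewrite ltz_nat.
Qed.

Lemma sum_pred1 (F : 'I_n -> int) a : \sum_i (i == a)%:R * F i = F a.
Proof.
rewrite (bigD1 a) //= eqxx mul1r big1 ?addr0 // => i /negbTE ->.
by rewrite mul0r.
Qed.

Lemma sum_pred2 (F : 'I_n -> int) a b : a != b ->
  \sum_i ((i == a) || (i == b))%:R * F i = F a + F b.
Proof.
move=> ab; rewrite (bigD1 a) //= eqxx mul1r (bigD1 b); last by rewrite /= eq_sym.
rewrite /= eqxx orbT mul1r addrA.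
rewrite big1 ?addr0 // => i /andP [ib ia].
by rewrite (negbTE ia) (negbTE ib) mul0r.
Qed.

Lemma sum_pred0 (F : 'I_n -> int) : \sum_i (false)%:R * F i = 0.
Proof. by rewrite big1 // => i _; rewrite mul0r. Qed.

Lemma dsum_and (P Q : pred 'I_n) S :
  \sum_i \sum_j (P i && Q j)%:R * S i j =
  \sum_i (P i)%:R * \sum_j (Q j)%:R * S i j.
Proof.
apply: eq_bigr => i _; rewrite mulr_sumr; apply: eq_bigr => j _.
by case: (P i); case: (Q j) => /=; ring.
Qed.

Lemma count_lem (f : 'I_n -> nat) m : (forall i, (f i <= m)%N) ->
  (\sum_i f i + #|[set i | (f i < m)%N]| <= m * n)%N.
Proof.
move=> h; rewrite card_sum -big_split /=.
apply: (@leq_trans (\sum_(i < n) m)).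
  apply: leq_sum => i _; have := h i; case: ltnP => /=; lia.
by rewrite sum_nat_const card_ord mulnC.
Qed.

Lemma card_sumR (P : pred 'I_n) : \sum_i (P i)%:R = (#|[set i | P i]|)%:Z.
Proof. by rewrite card_sum -[RHS]natz natr_sum. Qed.

Lemma Dv_row S a : Dv (fun i => i == a) (fun j => false) S = R S a.
Proof.
rewrite /Dv dsum_and sum_pred1 sum_pred0.
rewrite big1 ?mulr0 ?subr0 ?addr0 // => i _; by rewrite sum_pred0 mulr0.
Qed.

Lemma Dv_col S c : Dv (fun i => false) (fun j => j == c) S = C S c.
Proof.
rewrite /Dv dsum_and sum_pred1 sum_pred0.
rewrite big1 ?mulr0 ?subr0 ?add0r // => i _; by rewrite mul0r.
Qed.

Lemma Dv_1 S a c : Dv (fun i => i == a) (fun j => j == c) S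
  = R S a + C S c - 2 * S a c.
Proof.
rewrite /Dv dsum_and sum_pred1 sum_pred1.
by under eq_bigr do rewrite sum_pred1; rewrite sum_pred1.
Qed.

Lemma Dv_2 S a b c : a != b ->
  Dv (fun i => (i == a) || (i == b)) (fun j => j == c) S
  = R S a + R S b + C S c - 2 * (S a c + S b c).
Proof.
move=> ab; rewrite /Dv dsum_and sum_pred2 // sum_pred1.
by under eq_bigr do rewrite sum_pred1; rewrite sum_pred2.
Qed.

End Flip.

Lemma kr_le n (S : 'M[int]_(n, n)) i : pm1_matrix S -> 0 <= R S i -> (2 * kr S i <= n)%N.
Proof. by move=> h; rewrite R_kr // => H; lia. Qed.

Lemma kc_le n (S : 'M[int]_(n, n)) j : pm1_matrix S -> 0 <= C S j -> (2 * kc S j <= n)%N.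
Proof. by move=> h; rewrite C_kc // => H; lia. Qed.

Lemma exists_full n (f : 'I_n -> nat) m : (#|[set i | (f i < m)%N]| < n)%N ->
  exists c, ~~ (f c < m)%N.
Proof.
move=> hc; case: (pickP (fun c => ~~ (f c < m)%N)) => [c Hc | Hn]; first by exists c.
exfalso; move: hc; have -> : [set i | (f i < m)%N] = setT.
  by apply/setP => i; rewrite !inE; move: (Hn i) => /= /negbFE.
by rewrite cardsT card_ord ltnn.
Qed.

Lemma negcol_card n (S : 'M[int]_(n, n)) c :
  #|[set i | S i c == -1]| = kc S c.
Proof. by rewrite card_sum. Qed.

Lemma poscol_card n (S : 'M[int]_(n, n)) c : pm1_matrix S ->
  (#|[set i | S i c == 1]| + kc S c = n)%N.
Proof.
move=> h; rewrite -negcol_card -[RHS](card_ord n) -(cardsC [set i | S i c == 1]).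
congr (_ + _); apply: eq_card => i; rewrite !inE.
by case: (h i c) => ->.
Qed.

Lemma odd_case n (S : 'M[int]_(n, n)) m : pm1_matrix S ->
  (forall i, 0 <= R S i) -> (forall j, 0 <= C S j) ->
  n = (2 * m + 1)%N -> (m * n - (m - 1) <= mu S)%N -> (1 <= m)%N ->
  exists S' : 'M[int]_(n, n), mx_equiv S S' /\ (mu S' < mu S)%N.
Proof.
move=> pmS hR hC hn hmu m1.
have krm i : (kr S i <= m)%N by have := kr_le pmS (hR i); lia.
have kcm j : (kc S j <= m)%N by have := kc_le pmS (hC j); lia.
have h1 := count_lem krm; rewrite -mu_sum in h1.
have h2 := count_lem kcm; rewrite -mu_sumc in h2.
have cA : (#|[set i | (kr S i < m)%N]| <= m - 1)%N by lia.
have cB : (#|[set i | (kc S i < m)%N]| < n)%N by lia.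
have [c Hc] := exists_full cB.
have kcc : kc S c = m by have := kcm c; lia.
pose Pos := [set i | S i c == 1].
pose A := [set i | kr S i == m].
have hP : (#|Pos| + kc S c = n)%N := poscol_card c pmS.
have sub : Pos :\: A \subset [set i | (kr S i < m)%N].
  apply/subsetP => i; rewrite !inE => /andP [hi _].
  by have := krm i; move: hi; case: eqP => //= ? _; lia.
have := subset_leq_card sub; have := cardsID A Pos => e1 e2.
have gt1 : (1 < #|Pos :&: A|)%N by lia.
have [a [b [ha hb ab]]] := card_gt1P gt1.
move: ha hb; rewrite !inE => /andP [/eqP sa /eqP ka] /andP [/eqP sb /eqP kb].
apply: (flip_good (P := fun i => (i == a) || (i == b)) (Q := fun j => j == c)) => //.
rewrite Dv_2 // !R_kr // C_kc // ka kb kcc sa sb hn; lia.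
Qed.

Lemma even_case n (S : 'M[int]_(n, n)) m : pm1_matrix S ->
  (forall i, 0 <= R S i) -> (forall j, 0 <= C S j) ->
  n = (2 * m)%N -> (m * n - m <= mu S)%N -> (2 <= m)%N ->
  exists S' : 'M[int]_(n, n), mx_equiv S S' /\ (mu S' < mu S)%N.
Proof.
move=> pmS hR hC hn hmu m2.
have krm i : (kr S i <= m)%N by have := kr_le pmS (hR i); lia.
have kcm j : (kc S j <= m)%N by have := kc_le pmS (hC j); lia.
have h1 := count_lem krm; rewrite -mu_sum in h1.
have h2 := count_lem kcm; rewrite -mu_sumc in h2.
have cA : (#|[set i | (kr S i < m)%N]| <= m)%N by lia.
have cB : (#|[set i | (kc S i < m)%N]| <= m)%N by lia.
case: (pickP (fun p : 'I_n * 'I_n =>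
   [&& kr S p.1 == m, kc S p.2 == m & S p.1 p.2 == 1])) => [[a c] | H4].
  move=> /= /and3P [/eqP ha /eqP hc /eqP hs].
  apply: (flip_good (P := fun i => i == a) (Q := fun j => j == c)) => //.
  rewrite Dv_1 R_kr // C_kc // ha hc hs hn; lia.
pose A := [set i | kr S i == m].
pose B := [set j | kc S j == m].
have cAc : ~: A = [set i | (kr S i < m)%N].
  apply/setP => i; rewrite !inE; have := krm i; case: ltngtP => //; lia.
have cBc : ~: B = [set i | (kc S i < m)%N].
  apply/setP => i; rewrite !inE; have := kcm i; case: ltngtP => //; lia.
have eA := cardsC A; rewrite cAc card_ord in eA.
have eB := cardsC B; rewrite cBc card_ord in eB.
have hneg a c : a \in A -> c \in B -> S a c = -1.
  rewrite !inE => ha hc; have := H4 (a, c); rewrite /= ha hc /=.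
  by case: (pmS a c) => ->.
have [c0 c0B] : exists c, c \in B by apply/card_gt0P; lia.
have subA c : c \in B -> A \subset [set i | S i c == -1].
  by move=> cinB; apply/subsetP => i iA; rewrite inE hneg.
have cAm : #|A| = m.
  have := subset_leq_card (subA c0 c0B); rewrite negcol_card.
  move: c0B; rewrite inE => /eqP ->; lia.
have hpos i j : i \notin A -> j \in B -> S i j = 1.
  move=> iA jB.
  have eq : #|A| = #|[set i | S i j == -1]|.
    by rewrite negcol_card cAm; move: jB; rewrite inE => /eqP ->.
  have := subset_cardP eq (subA j jB) => /(_ i); rewrite inE.
  move/negbTE: iA => -> /esym; by case: (pmS i j) => -> //.
apply: (flip_good (P := fun i => i \notin A) (Q := fun j => j \in B)) => //.
have t1 : \sum_i (i \notin A)%:R * R S i = T S.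
  rewrite /T; apply: eq_bigr => i _; case: (boolP (i \in A)) => hi /=.
    rewrite mul0r -/(R S i) R_kr //; move: hi; rewrite inE => /eqP ->; lia.
  by rewrite mul1r.
have t2 : \sum_j (j \in B)%:R * C S j = 0.
  apply: big1 => j _; case: (boolP (j \in B)) => hj /=; last by rewrite mul0r.
  rewrite C_kc //; move: hj; rewrite inE => /eqP ->; lia.
have t3 : \sum_i \sum_j ((i \notin A) && (j \in B))%:R * S i j
    = (#|[set i | i \notin A]|)%:Z * (#|B|)%:Z.
  rewrite dsum_and -card_sumR mulr_suml; apply: eq_bigr => i _.
  case: (boolP (i \in A)) => hi /=; first by rewrite !mul0r.
  rewrite !mul1r -cardsE -card_sumR; apply: eq_bigr => j _.
  case: (boolP (j \in B)) => hj /=; last by rewrite !mul0r.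
  by rewrite hpos // mulr1.
have cnA : #|[set i | i \notin A]| = m.
  have -> : [set i | i \notin A] = ~: A by apply/setP => i; rewrite !inE.
  rewrite cAc; lia.
rewrite /Dv t1 t2 t3 cnA T_mu //.
have hB : (m * m <= m * #|B|)%N by apply: leq_mul => //; lia.
have e3 : (n * n = 4 * (m * m))%N by rewrite hn; nia.
have e4 : (m * n = 2 * (m * m))%N by rewrite hn; nia.
move: hB e3 e4 hmu m2; set b := #|B|; set x := (m * m)%N; set y := (m * b)%N.
move=> hB e3 e4 hmu m2.
have : (x >= 2 * m)%N by rewrite /x; nia.
rewrite -PoszM -/y e3 => hx; rewrite e4 in hmu; lia.
Qed.

Unset Implicit Arguments.
Theorem proposition3p4 (n : nat) (S : 'M[int]_(n, n)) :
  (3 <= n)%N -> pm1_matrix S ->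
  (forall m : nat, n = (2 * m + 1)%N -> (m * n - (m - 1) <= mu S)%N ->
     exists S' : 'M[int]_(n, n), mx_equiv S S' /\ (mu S' < mu S)%N) /\
  (forall m : nat, n = (2 * m)%N -> (m * n - m <= mu S)%N ->
     exists S' : 'M[int]_(n, n), mx_equiv S S' /\ (mu S' < mu S)%N).
Proof.
move=> n3 pmS.
suff [H|[hR hC]] : (exists S' : 'M[int]_(n, n), mx_equiv S S' /\ (mu S' < mu S)%N)
   \/ ((forall i, 0 <= R S i) /\ (forall j, 0 <= C S j)).
- by split=> m _ _.
- split=> m hn hmu.
    apply: (odd_case pmS hR hC hn hmu); lia.
  apply: (even_case pmS hR hC hn hmu); lia.
case: (pickP (fun i => R S i < 0)) => [i Hi | HR].
  by left; apply: (flip_good (P := fun k => k == i) (Q := fun _ => false)); rewrite // Dv_row.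
case: (pickP (fun j => C S j < 0)) => [j Hj | HC].
  by left; apply: (flip_good (P := fun _ => false) (Q := fun k => k == j)); rewrite // Dv_col.
right; split=> k.
  by move: (HR k) => /= /negbT; rewrite -leNgt.
by move: (HC k) => /= /negbT; rewrite -leNgt.
Qed.
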